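(* Let $n\ge 2$. The probability $p_n$ that two randomly generated (i.e. an unordered pair of distinct matrices chosen uniformly at random) $n^2\times n^2$ S-permutation matrices are disjoint is $$p_n=\frac{\xi_n}{(n!)^{2n}-1},\qquad\text{where}\qquad \xi_n=\sum_{\overline{A}\in\overline{\mathfrak{B}}_n,\ \varepsilon(\overline{A})\ge 2}(-1)^{\varepsilon(\overline{A})}\,|\overline{A}|\prod_{i=0}^{n-2}\left[(n-i)!\right]^{\psi_i(\overline{A})}.$$
   Context: An $n^2\times n^2$ S-permutation matrix is an $n^2\times n^2$ binary matrix which, when partitioned into $n^2$ non-intersecting consecutive $n\times n$ blocks, contains exactly one $1$ in each row, each column and each block; there are $(n!)^{2n}$ of them. Two binary matrices $(a_{ij}),(b_{ij})$ of equal size are disjoint if there are no $i,j$ with $a_{ij}=b_{ij}=1$. $\mathfrak{B}_n$ is the set of $n\times n$ binary matrices. For $A\in\mathfrak{B}_n$, $r_k(A)$ (resp. $c_k(A)$) is the number of rows (resp. columns) of $A$ with exactly $k$ ones, $\psi_k(A)=r_k(A)+c_k(A)$, and $\varepsilon(A)$ is the total number of ones of $A$. $A\sim B$ iff $B$ is obtained from $A$ by permuting rows; $\overline{A}$ is the equivalence class of $A$, $|\overline{A}|$ its cardinality, $\overline{\mathfrak{B}}_n=\mathfrak{B}_n/\!\sim$; $\psi_k,\varepsilon$ are defined on classes via any representative. *)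

(* Defs.v *)
From mathcomp Require Import all_boot all_order all_fingroup all_algebra.
Set Implicit Arguments. Unset Strict Implicit. Unset Printing Implicit Defensive.
Import GRing.Theory Num.Theory.

Definition is_sperm (n : nat) (A : 'M[bool]_(n ^ 2)) : bool :=
  [&& [forall i, #|[set j | A i j]| == 1],
      [forall j, #|[set i | A i j]| == 1] &
      [forall bi : 'I_n, forall bj : 'I_n,
         #|[set ij : 'I_(n ^ 2) * 'I_(n ^ 2) |
             [&& ij.1 %/ n == bi, ij.2 %/ n == bj & A ij.1 ij.2]]| == 1]].

Definition sperm_set (n : nat) : {set 'M[bool]_(n ^ 2)} :=
  [set A | is_sperm A].

Definition disjoint_mx (m : nat) (A B : 'M[bool]_m) : bool :=
  [forall i, forall j, ~~ (A i j && B i j)].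

Definition sperm_pairs (n : nat) : {set {set 'M[bool]_(n ^ 2)}} :=
  [set P : {set 'M[bool]_(n ^ 2)} | (P \subset sperm_set n) && (#|P| == 2)].

Definition disjoint_sperm_pairs (n : nat) : {set {set 'M[bool]_(n ^ 2)}} :=
  [set P in sperm_pairs n |
     [forall A in P, forall B in P, (A != B) ==> disjoint_mx A B]].

Definition p_n (n : nat) : rat :=
  (#|disjoint_sperm_pairs n|)%:R / (#|sperm_pairs n|)%:R.

Definition r_k (n k : nat) (A : 'M[bool]_n) : nat :=
  #|[set i | #|[set j | A i j]| == k]|.
Definition c_k (n k : nat) (A : 'M[bool]_n) : nat :=
  #|[set j | #|[set i | A i j]| == k]|.
Definition psi (n k : nat) (A : 'M[bool]_n) : nat := r_k k A + c_k k A.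
Definition eps (n : nat) (A : 'M[bool]_n) : nat :=
  #|[set ij : 'I_n * 'I_n | A ij.1 ij.2]|.

Definition row_equiv (n : nat) (A B : 'M[bool]_n) : bool :=
  [exists s : 'S_n, B == row_perm s A].

Definition classes (n : nat) : {set {set 'M[bool]_n}} :=
  equivalence_partition (@row_equiv n) [set: 'M[bool]_n].

(* A representative of a class (classes are nonempty). *)
Definition cls_repr (n : nat) (C : {set 'M[bool]_n}) : 'M[bool]_n :=
  odflt (const_mx false) [pick A in C].

Definition xi (n : nat) : int :=
  \sum_(C in classes n | 2 <= eps (cls_repr C))
     ((-1) ^+ eps (cls_repr C) * (#|C|)%:Z *
      (\prod_(i < n.-1) ((n - i)`! ^ psi i (cls_repr C))%N)%:Z)%R.

(* Main.v *)
Require Import Defs.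
From mathcomp Require Import all_boot all_order all_fingroup all_algebra.
From mathcomp Require Import zify ring.
Import GRing.Theory Num.Theory.
Set Implicit Arguments. Unset Strict Implicit. Unset Printing Implicit Defensive.

Section S.
Variable n : nat.
Local Notation m := n.+1.

Lemma blk_lt (i : 'I_(m ^ 2)) : i %/ m < m.
Proof. by rewrite ltn_divLR // mulnn. Qed.
Lemma off_lt (i : 'I_(m ^ 2)) : i %% m < m.
Proof. by rewrite ltn_mod. Qed.
Definition blk (i : 'I_(m ^ 2)) : 'I_m := Ordinal (blk_lt i).
Definition off (i : 'I_(m ^ 2)) : 'I_m := Ordinal (off_lt i).
Lemma idx_lt (b x : 'I_m) : b * m + x < m ^ 2.
Proof. have := ltn_ord b; have := ltn_ord x; rewrite expnS expn1; nia. Qed.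
Definition idx (b x : 'I_m) : 'I_(m ^ 2) := Ordinal (idx_lt b x).
Lemma blk_idx b x : blk (idx b x) = b.
Proof. apply: val_inj => /=; rewrite divnMDl // divn_small ?addn0 //. Qed.
Lemma off_idx b x : off (idx b x) = x.
Proof. apply: val_inj => /=; rewrite modnMDl modn_small //. Qed.
Lemma idx_blk_off i : idx (blk i) (off i) = i.
Proof. apply: val_inj => /=; by rewrite -divn_eq. Qed.
Lemma idx_inj b x b' x' : idx b x = idx b' x' -> b = b' /\ x = x'.
Proof. move=> h; split; [rewrite -(blk_idx b x) h blk_idx | rewrite -(off_idx b x) h off_idx]; done. Qed.
Lemma blk_off_inj i j : blk i = blk j -> off i = off j -> i = j.
Proof. by move=> h1 h2; rewrite -(idx_blk_off i) h1 h2 idx_blk_off. Qed.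

Definition X := ({ffun 'I_m -> 'S_m} * {ffun 'I_m -> 'S_m})%type.

Definition Phi (x : X) : 'M[bool]_(m ^ 2) :=
  \matrix_(i, j) ((x.1 (blk i) (blk j) == off i) && (x.2 (blk j) (blk i) == off j)).

Lemma PhiE x i j : Phi x i j = (x.1 (blk i) (blk j) == off i) && (x.2 (blk j) (blk i) == off j).
Proof. by rewrite mxE. Qed.

Lemma Phi_row x i j : Phi x i j = (j == idx ((x.1 (blk i))^-1%g (off i)) (x.2 ((x.1 (blk i))^-1%g (off i)) (blk i))).
Proof.
rewrite PhiE; apply/andP/eqP => [[/eqP h1 /eqP h2]|->].
  by rewrite -h1 permK h2 idx_blk_off.
by rewrite blk_idx off_idx permKV !eqxx.
Qed.

Lemma Phi_col x i j : Phi x i j = (i == idx ((x.2 (blk j))^-1%g (off j)) (x.1 ((x.2 (blk j))^-1%g (off j)) (blk j))).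
Proof.
rewrite PhiE; apply/andP/eqP => [[/eqP h1 /eqP h2]|->].
  by rewrite -h2 permK h1 idx_blk_off.
by rewrite blk_idx off_idx permKV !eqxx.
Qed.

Lemma blk_eqE (i : 'I_(m ^ 2)) (b : 'I_m) : (i %/ m == b) = (blk i == b).
Proof. by []. Qed.

Lemma Phi_sperm x : is_sperm (Phi x).
Proof.
apply/and3P; split.
- apply/forallP => i; apply/eqP.
  rewrite (_ : [set j | _] = [set idx ((x.1 (blk i))^-1%g (off i)) (x.2 ((x.1 (blk i))^-1%g (off i)) (blk i))]) ?cards1 //.
  by apply/setP => j; rewrite !inE Phi_row.
- apply/forallP => j; apply/eqP.
  rewrite (_ : [set i | _] = [set idx ((x.2 (blk j))^-1%g (off j)) (x.1 ((x.2 (blk j))^-1%g (off j)) (blk j))]) ?cards1 //.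
  by apply/setP => i; rewrite !inE Phi_col.
- apply/forallP => bi; apply/forallP => bj; apply/eqP.
  rewrite (_ : [set ij | _] = [set (idx bi (x.1 bi bj), idx bj (x.2 bj bi))]) ?cards1 //.
  apply/setP => [[i j]]; rewrite !inE /= PhiE !blk_eqE.
  apply/idP/eqP => [/and3P[/eqP hi /eqP hj /andP[/eqP h1 /eqP h2]]|[-> ->]].
    by rewrite -hi -hj h1 h2 !idx_blk_off.
  by rewrite !blk_idx !off_idx !eqxx.
Qed.

Lemma Phi_at x bi bj : Phi x (idx bi (x.1 bi bj)) (idx bj (x.2 bj bi)).
Proof. by rewrite PhiE !blk_idx !off_idx !eqxx. Qed.

Lemma Phi_inj : injective Phi.
Proof.
move=> [r1 r2] [s1 s2] h.
have key : forall bi bj, r1 bi bj = s1 bi bj /\ r2 bj bi = s2 bj bi.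
  move=> bi bj; have := Phi_at (r1, r2) bi bj; rewrite h PhiE /= !blk_idx !off_idx.
  by case/andP => /eqP -> /eqP ->.
congr (_, _); apply/ffunP => b; apply/permP => b'.
- by case: (key b b').
- by case: (key b' b).
Qed.

Definition agree (x y : X) (bi bj : 'I_m) : bool :=
  (x.1 bi bj == y.1 bi bj) && (x.2 bj bi == y.2 bj bi).

Lemma Phi_disj x y : disjoint_mx (Phi x) (Phi y) = [forall bi, forall bj, ~~ agree x y bi bj].
Proof.
apply/forallP/forallP => [h bi|h i].
  apply/forallP => bj; apply/negP => /andP[/eqP e1 /eqP e2].
  have := h (idx bi (x.1 bi bj)); move/forallP/(_ (idx bj (x.2 bj bi))).
  by rewrite Phi_at /= PhiE !blk_idx !off_idx e1 e2 !eqxx.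
apply/forallP => j; apply/negP => /andP[]; rewrite !PhiE.
case/andP => /eqP h1 /eqP h2 /andP[/eqP h3 /eqP h4].
have := h (blk i); move/forallP/(_ (blk j)).
by rewrite /agree h1 h2 h3 h4 !eqxx.
Qed.

Lemma sperm_Phi A : is_sperm A -> exists x, A = Phi x.
Proof.
move/and3P => [/forallP hr /forallP hc /forallP hb].
have rowu : forall i j j', A i j -> A i j' -> j = j'.
  move=> i j j' h1 h2; have /cards1P[p hp] := hr i.
  have : j \in [set j | A i j] by rewrite inE.
  have : j' \in [set j | A i j] by rewrite inE.
  by rewrite hp !inE => /eqP -> /eqP ->.
have colu : forall i i' j, A i j -> A i' j -> i = i'.
  move=> i i' j h1 h2; have /cards1P[p hp] := hc j.
  have : i \in [set i | A i j] by rewrite inE.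
  have : i' \in [set i | A i j] by rewrite inE.
  by rewrite hp !inE => /eqP -> /eqP ->.
pose S (bi bj : 'I_m) := [set ij : 'I_(m ^ 2) * 'I_(m ^ 2) |
             [&& ij.1 %/ m == bi, ij.2 %/ m == bj & A ij.1 ij.2]].
pose pos bi bj := odflt (idx bi bi, idx bi bi) [pick ij in S bi bj].
have posP : forall bi bj ij, (ij \in S bi bj) = (ij == pos bi bj).
  move=> bi bj ij; have /forallP/(_ bj)/cards1P[p hp] := hb bi.
  have hS : S bi bj = [set p] := hp.
  rewrite /pos hS; case: pickP => [q|/(_ p)]; last by rewrite inE eqxx.
  by rewrite !inE => /eqP ->.
have posS : forall bi bj, [/\ blk (pos bi bj).1 = bi, blk (pos bi bj).2 = bj & A (pos bi bj).1 (pos bi bj).2].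
  move=> bi bj; have := eqxx (pos bi bj); rewrite -posP inE !blk_eqE.
  by case/and3P => /eqP -> /eqP -> ->.
pose f1 bi bj := off (pos bi bj).1.
pose f2 bj bi := off (pos bi bj).2.
have inj1 : forall bi, injective (f1 bi).
  move=> bi bj bj' e; have [a1 a2 a3] := posS bi bj; have [b1 b2 b3] := posS bi bj'.
  have ei : (pos bi bj).1 = (pos bi bj').1 by apply: blk_off_inj; rewrite ?a1 ?b1.
  rewrite ei in a3; have := rowu _ _ _ a3 b3.
  by move=> ej; rewrite -a2 -b2 ej.
have inj2 : forall bj, injective (f2 bj).
  move=> bj bi bi' e; have [a1 a2 a3] := posS bi bj; have [b1 b2 b3] := posS bi' bj.
  have ej : (pos bi bj).2 = (pos bi' bj).2 by apply: blk_off_inj; rewrite ?a2 ?b2.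
  rewrite ej in a3; have := colu _ _ _ a3 b3.
  by move=> ei; rewrite -a1 -b1 ei.
exists ([ffun bi => perm (inj1 bi)], [ffun bj => perm (inj2 bj)]).
apply/matrixP => i j; rewrite PhiE /= !ffunE !permE /f1 /f2.
apply/idP/andP => [hA|[/eqP e1 /eqP e2]].
  have : (i, j) \in S (blk i) (blk j) by rewrite inE /= hA !eqxx.
  by rewrite posP => /eqP <-; rewrite !eqxx.
have [a1 a2 a3] := posS (blk i) (blk j).
have ei : (pos (blk i) (blk j)).1 = i by apply: blk_off_inj.
have ej : (pos (blk i) (blk j)).2 = j by apply: blk_off_inj.
by move: a3; rewrite ei ej.
Qed.

Lemma card_fix (t : 'S_m) (S : {set 'I_m}) :
  #|[set s : 'S_m | [forall j in S, s j == t j]]| = (m - #|S|)`!.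
Proof.
have -> : [set s : 'S_m | [forall j in S, s j == t j]] = [set (p * t)%g | p in [set p | perm_on (~: S) p]].
  apply/setP => s; rewrite inE; apply/idP/imsetP => [/forall_inP h|[p]].
    exists (s * t^-1)%g; last by rewrite -mulgA mulVg mulg1.
    rewrite inE; apply/subsetP => j; rewrite !inE permM; apply: contra => hj.
    by rewrite (eqP (h j hj)) permK.
  rewrite inE => hp ->; apply/forall_inP => j hj; rewrite permM.
  have : j \notin ~: S by rewrite inE negbK.
  by move/(out_perm hp) ->.
rewrite card_imset; last exact: mulIg.
have -> : #|[set p | perm_on (~: S) p]| = #|perm_on (~: S)| by apply: eq_card => p; rewrite inE.
by rewrite card_perm (cardsCs (~: S)) setCK card_ord.
Qed.

Lemma card_fam (Q : 'I_m -> {set 'S_m}) :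
  #|[set f : {ffun 'I_m -> 'S_m} | [forall b, f b \in Q b]]| = \prod_b #|Q b|.
Proof.
have -> : #|[set f : {ffun 'I_m -> 'S_m} | [forall b, f b \in Q b]]| = #|family (fun b => Q b)|.
  by apply: eq_card => f; rewrite inE.
rewrite card_family foldrE big_image; by apply: eq_bigl.
Qed.

Definition rowc (E : {set 'I_m * 'I_m}) bi := #|[set bj | (bi, bj) \in E]|.
Definition colc (E : {set 'I_m * 'I_m}) bj := #|[set bi | (bi, bj) \in E]|.
Definition G (E : {set 'I_m * 'I_m}) : nat :=
  (\prod_bi (m - rowc E bi)`!) * (\prod_bj (m - colc E bj)`!).

Lemma card_agree x (E : {set 'I_m * 'I_m}) :
  #|[set y : X | [forall b in E, agree x y b.1 b.2]]| = G E.
Proof.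
pose Q1 bi := [set s : 'S_m | [forall j in [set bj | (bi, bj) \in E], s j == x.1 bi j]].
pose Q2 bj := [set s : 'S_m | [forall j in [set bi | (bi, bj) \in E], s j == x.2 bj j]].
rewrite (_ : [set y | _] = setX [set f : {ffun 'I_m -> 'S_m} | [forall bi, f bi \in Q1 bi]]
                                [set g : {ffun 'I_m -> 'S_m} | [forall bj, g bj \in Q2 bj]]).
  by rewrite cardsX !card_fam /G; congr (_ * _); apply: eq_bigr => b _; rewrite card_fix.
apply/setP => [[f g]]; rewrite !inE /=.
apply/forall_inP/andP => [h|[/forallP h1 /forallP h2]].
  split; apply/forallP => b; rewrite inE; apply/forall_inP => b'; rewrite inE => hb.
    by have /andP[/eqP e1 /eqP e2] := h _ hb; rewrite e1.
  by have /andP[/eqP e1 /eqP e2] := h _ hb; rewrite e2.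
move=> [bi bj] hb; rewrite /agree /=.
have := h1 bi; rewrite inE => /forall_inP/(_ bj); rewrite inE => /(_ hb) /eqP ->.
have := h2 bj; rewrite inE => /forall_inP/(_ bi); rewrite inE => /(_ hb) /eqP ->.
by rewrite !eqxx.
Qed.

Lemma prod_ind (I : finType) (J : {set I}) (a : pred I) :
  (\prod_(b in J) ((a b)%:R : int) = ([forall b in J, a b])%:R)%R.
Proof.
case: (boolP [forall b in J, a b]) => [/forall_inP h|].
  by rewrite big1 // => b /h ->.
rewrite negb_forall_in => /existsP[b /andP[bJ nb]].
by rewrite (bigD1 b) //= (negbTE nb) GRing.mul0r.
Qed.

Lemma incl_excl_gen (I : finType) (a : pred I) :
  (([forall b, ~~ a b])%:R : int)%R =
  (\sum_(J : {set I}) (-1) ^+ #|J| * ([forall b in J, a b])%:R)%R.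
Proof.
have -> : (([forall b, ~~ a b])%:R : int)%R = (\prod_b (- (a b)%:R + 1))%R.
  case: (boolP [forall b, ~~ a b]) => [/forallP h|].
    by rewrite big1 // => b _; rewrite (negbTE (h b)) GRing.oppr0 GRing.add0r.
  rewrite negb_forall => /existsP[b]; rewrite negbK => hb.
  by rewrite (bigD1 b) //= hb GRing.addNr GRing.mul0r.
rewrite bigA_distr; apply: eq_bigr => J _.
by rewrite -big_mkcond /= prodrN prod_ind.
Qed.

Lemma incl_excl x :
  ((#|[set y : X | [forall bi, forall bj, ~~ agree x y bi bj]]|)%:R : int)%R =
  (\sum_(E : {set 'I_m * 'I_m}) (-1) ^+ #|E| * (G E)%:R)%R.
Proof.
rewrite -sum1_card natr_sum big_mkcond /=.
under eq_bigr => y _.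
  have -> : (y \in [set y | [forall bi, forall bj, ~~ agree x y bi bj]]) =
            [forall b : 'I_m * 'I_m, ~~ agree x y b.1 b.2].
    rewrite inE; apply/forallP/forallP => [h [bi bj]|h bi].
      by have /forallP := h bi; apply.
    by apply/forallP => bj; apply: (h (bi, bj)).
  rewrite (_ : (if _ then 1%:R else 0)%R = ([forall b, ~~ agree x y b.1 b.2])%:R%R); last by case: ifP.
  rewrite (incl_excl_gen (fun b : 'I_m * 'I_m => agree x y b.1 b.2)).
over.
rewrite exchange_big /=; apply: eq_bigr => E _.
rewrite -GRing.mulr_sumr -(card_agree x E) -sum1_card natr_sum big_mkcond /=.
congr (_ * _)%R; rewrite [RHS]big_mkcond; apply: eq_bigr => y _; rewrite inE.
by case: [forall b in E, _].
Qed.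

Lemma prod_delta (a : 'I_m) :
  \prod_(bi : 'I_m) (m - (bi == a))`! = n`! * m`! ^ n.
Proof.
rewrite (bigD1 a) //= eqxx subn1 /=; congr (_ * _).
rewrite (eq_bigr (fun _ => m`!)); last by move=> i /negbTE ->; rewrite subn0.
by rewrite prod_nat_const cardC1 card_ord.
Qed.

Lemma G0 : G set0 = m`! ^ m * m`! ^ m.
Proof.
rewrite /G /rowc /colc.
rewrite (eq_bigr (fun _ => m`!)); last by move=> i _; rewrite (_ : [set _ | _] = set0) ?cards0 ?subn0 //; apply/setP => j; rewrite !inE.
rewrite [X in _ * X](eq_bigr (fun _ => m`!)); last by move=> i _; rewrite (_ : [set _ | _] = set0) ?cards0 ?subn0 //; apply/setP => j; rewrite !inE.
by rewrite !prod_nat_const card_ord.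
Qed.

Lemma G1 a b : G [set (a, b)] = (n`! * m`! ^ n) * (n`! * m`! ^ n).
Proof.
rewrite /G /rowc /colc -{1}(prod_delta a) -(prod_delta b); congr (_ * _); apply: eq_bigr => i _.
  case: eqP => [->|ne].
    by rewrite (_ : [set _ | _] = [set b]) ?cards1 //; apply/setP => j; rewrite !inE xpair_eqE eqxx.
  by rewrite (_ : [set _ | _] = set0) ?cards0 //; apply/setP => j; rewrite !inE xpair_eqE; case: eqP.
case: eqP => [->|ne].
  by rewrite (_ : [set _ | _] = [set a]) ?cards1 //; apply/setP => j; rewrite !inE xpair_eqE eqxx andbT.
by rewrite (_ : [set _ | _] = set0) ?cards0 //; apply/setP => j; rewrite !inE xpair_eqE andbC; case: eqP.
Qed.

Lemma small_terms :
  (\sum_(E : {set 'I_m * 'I_m} | (#|E| < 2)%N) (-1) ^+ #|E| * ((G E)%:R : int) = 0)%R.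
Proof.
rewrite (bigID (fun E : {set 'I_m * 'I_m} => #|E| == 0)) /=.
rewrite (eq_bigl (pred1 set0)); last by move=> E; rewrite /= cards_eq0; case: eqP => [->|]; rewrite ?cards0 ?andbF.
rewrite big_pred1_eq cards0 G0 GRing.expr0 GRing.mul1r.
rewrite (eq_bigl (fun E => E \in [set [set b] | b in [set: 'I_m * 'I_m]])); last first.
  move=> E; apply/andP/imsetP => [[h1 h2]|[b _ ->]].
    have /cards1P[b ->] : #|E| == 1 by move: h1 h2; case: #|E| => [|[|]].
    by exists b; rewrite ?inE.
  by rewrite cards1.
rewrite big_imset /=; last by move=> b c _ _; apply: set1_inj.
rewrite (eq_bigr (fun _ => - ((n`! * m`! ^ n) * (n`! * m`! ^ n))%:R)%R); last first.
  by move=> [a b] _; rewrite cards1 GRing.expr1 GRing.mulN1r G1.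
have e : m`! ^ m * m`! ^ m = (n`! * m`! ^ n) * (n`! * m`! ^ n) * #|[set: 'I_m * 'I_m]|.
  rewrite cardsT card_prod card_ord expnS factS; ring.
have hl : forall c k : nat, ((c * k)%:R - c%:R *+ k : int)%R = 0%R by move=> c k; rewrite GRing.natrM GRing.mulr_natr GRing.subrr.
by rewrite GRing.sumr_const e GRing.mulNrn; apply: hl.
Qed.

Lemma group_prod (h : 'I_m -> nat) : (forall i, h i <= m) ->
  \prod_i (m - h i)`! = \prod_(k < m.+1) ((m - k)`! ^ #|[set i | h i == k]|).
Proof.
move=> hb.
rewrite (partition_big (fun i => (inord (h i) : 'I_m.+1)) xpredT) //=.
apply: eq_bigr => k _.
rewrite (eq_bigr (fun _ => (m - k)`!)); last first.
  by move=> i hk; rewrite -(eqP hk) inordK // ltnS.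
rewrite prod_nat_const; congr (_ ^ _); apply: eq_card => i; rewrite !inE.
by rewrite unfold_in /= inordK // ltnS.
Qed.

Definition setof (M : 'M[bool]_m) : {set 'I_m * 'I_m} := [set ij | M ij.1 ij.2].
Definition matof (E : {set 'I_m * 'I_m}) : 'M[bool]_m := \matrix_(i, j) ((i, j) \in E).

Lemma setofK : cancel setof matof.
Proof. by move=> M; apply/matrixP => i j; rewrite mxE inE. Qed.
Lemma matofK : cancel matof setof.
Proof. by move=> E; apply/setP => [[i j]]; rewrite inE mxE. Qed.

Definition PP (M : 'M[bool]_m) : nat := \prod_(i < m.-1) ((m - i)`! ^ psi i M).

Lemma G_setof M : G (setof M) = PP M.
Proof.
have hr : forall bi, rowc (setof M) bi = #|[set j | M bi j]|.
  by move=> bi; rewrite /rowc; apply: eq_card => j; rewrite !inE.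
have hc : forall bj, colc (setof M) bj = #|[set i | M i bj]|.
  by move=> bj; rewrite /colc; apply: eq_card => j; rewrite !inE.
rewrite /G (eq_bigr _ (fun bi _ => congr1 (fun t => (m - t)`!) (hr bi))).
rewrite [X in _ * X](eq_bigr _ (fun bj _ => congr1 (fun t => (m - t)`!) (hc bj))).
rewrite !group_prod; try by move=> i; rewrite -[X in _ <= X](card_ord m) max_card.
rewrite -big_split /=.
rewrite big_ord_recr big_ord_recr /= /PP.
rewrite subnn subSn // subnn fact0 !exp1n !muln1.
by apply: eq_bigr => k _; rewrite /psi /r_k /c_k expnD.
Qed.

Lemma big_terms :
  (\sum_(E : {set 'I_m * 'I_m} | (2 <= #|E|)%N) (-1) ^+ #|E| * ((G E)%:R : int))%R =
  (\sum_(M : 'M[bool]_m | (2 <= eps M)%N) (-1) ^+ eps M * ((PP M)%:R : int))%R.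
Proof.
rewrite (reindex setof); last by apply: onW_bij; exists matof; [exact: setofK | exact: matofK].
by apply: eq_bigr => M _; rewrite G_setof.
Qed.

Lemma count_disj x :
  ((#|[set y : X | [forall bi, forall bj, ~~ agree x y bi bj]]|)%:R : int)%R =
  (\sum_(M : 'M[bool]_m | (2 <= eps M)%N) (-1) ^+ eps M * ((PP M)%:R : int))%R.
Proof.
rewrite incl_excl (bigID (fun E : {set 'I_m * 'I_m} => (#|E| < 2)%N)) /= small_terms GRing.add0r -big_terms.
by apply: eq_bigl => E; rewrite -leqNgt.
Qed.

Lemma eps_perm (s : 'S_m) (M : 'M[bool]_m) : eps (row_perm s M) = eps M.
Proof.
rewrite /eps -(card_preimset [set ij : 'I_m * 'I_m | M ij.1 ij.2] (f := fun ij => (s ij.1, ij.2))).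
  by apply: eq_card => ij; rewrite !inE mxE.
by move=> [a b] [c d] /= [/perm_inj -> ->].
Qed.

Lemma rk_perm (s : 'S_m) (M : 'M[bool]_m) k : r_k k (row_perm s M) = r_k k M.
Proof.
rewrite /r_k -(card_preimset [set i | #|[set j | M i j]| == k] (perm_inj (s := s))).
apply: eq_card => i; rewrite !inE; congr (_ == _); apply: eq_card => j; rewrite !inE mxE //.
Qed.

Lemma ck_perm (s : 'S_m) (M : 'M[bool]_m) k : c_k k (row_perm s M) = c_k k M.
Proof.
rewrite /c_k; apply: eq_card => j; rewrite !inE; congr (_ == _).
rewrite -(card_preimset [set i | M i j] (perm_inj (s := s))).
by apply: eq_card => i; rewrite !inE mxE.
Qed.

Lemma PP_perm (s : 'S_m) (M : 'M[bool]_m) : PP (row_perm s M) = PP M.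
Proof. by apply: eq_bigr => i _; rewrite /psi rk_perm ck_perm. Qed.

Lemma row_equiv_rel : equivalence_rel (@row_equiv m).
Proof.
move=> x y z; split.
  by apply/existsP; exists 1%g; rewrite row_perm1.
case/existsP => s /eqP ->; apply/existsP/existsP => [[t /eqP ->]|[u /eqP ->]].
  exists (t * s^-1)%g; by rewrite -row_permM -mulgA mulVg mulg1.
by exists (u * s)%g; rewrite row_permM.
Qed.

Lemma xi_eq :
  xi m = (\sum_(M : 'M[bool]_m | (2 <= eps M)%N) (-1) ^+ eps M * ((PP M)%:R : int))%R.
Proof.
have eqR : {in [set: 'M[bool]_m] & &, equivalence_rel (@row_equiv m)}.
  by move=> x y z _ _ _; apply: row_equiv_rel.
have /and3P[/eqP hcov htriv h0] := equivalence_partitionP eqR.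
have hbl := pblock_equivalence_partition eqR.
have inC : forall C, C \in Defs.classes m -> forall M, M \in C ->
    exists s : 'S_m, M = row_perm s (cls_repr C).
  move=> C hC M hM.
  have hr : cls_repr C \in C.
    rewrite /cls_repr; case: pickP => [A //|/(_ M)]; by rewrite hM.
  have := hbl (cls_repr C) M (in_setT _) (in_setT _); rewrite (def_pblock htriv hC hr) hM.
  by move/esym/existsP => [s /eqP ->]; exists s.
rewrite big_mkcond /= (eq_bigl (fun M => M \in cover (Defs.classes m))); last by move=> M; rewrite hcov inE.
rewrite big_trivIset // /xi big_mkcondr /=.
apply: eq_bigr => C hC.
have H : forall M, M \in C -> (if (2 <= eps M)%N then ((-1) ^+ eps M * ((PP M)%:R : int))%R else 0%R)
    = (if (2 <= eps (cls_repr C))%N then ((-1) ^+ eps (cls_repr C) * ((PP (cls_repr C))%:R : int))%R else 0%R).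
  by move=> M hM; have [s ->] := inC C hC M hM; rewrite eps_perm PP_perm.
rewrite (eq_bigr _ H) GRing.sumr_const.
case: ifP => _; last by rewrite GRing.mul0rn.
by rewrite -GRing.mulrnAr -GRing.mulrA -GRing.mulr_natl !natz.
Qed.

Lemma sperm_imset : sperm_set m = Phi @: setT.
Proof.
apply/setP => A; rewrite inE; apply/idP/imsetP => [/sperm_Phi [x ->]|[x _ ->]].
  by exists x.
exact: Phi_sperm.
Qed.

Lemma card_sperm : #|sperm_set m| = #|{: X}|.
Proof. by rewrite sperm_imset card_imset ?cardsT //; exact: Phi_inj. Qed.

Lemma disj_sym (A B : 'M[bool]_(m ^ 2)) : disjoint_mx A B = disjoint_mx B A.
Proof.
by apply/forallP/forallP => h i; apply/forallP => j; have /forallP/(_ j) := h i; rewrite andbC.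
Qed.

Lemma sperm_nd A : A \in sperm_set m -> ~~ disjoint_mx A A.
Proof.
rewrite sperm_imset => /imsetP[x _ ->]; rewrite Phi_disj negb_forall.
apply/existsP; exists ord0; rewrite negb_forall; apply/existsP; exists ord0.
by rewrite negbK /agree !eqxx.
Qed.

Lemma card_pairs_A A : A \in sperm_set m ->
  #|[set P in disjoint_sperm_pairs m | A \in P]| =
  #|[set B in sperm_set m | disjoint_mx A B]|.
Proof.
move=> hA.
rewrite (_ : [set P in _ | _] = (fun B => [set A; B]) @: [set B in sperm_set m | disjoint_mx A B]).
  rewrite card_in_imset //.
  move=> B C; rewrite !inE => /andP[_ hB] /andP[_ hC] e.
  have : C \in [set A; B] by rewrite e !inE eqxx orbT.
  rewrite !inE => /orP[/eqP eCA|/eqP //].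
  by move: hC; rewrite eCA (negbTE (sperm_nd hA)).
apply/setP => P; rewrite !inE; apply/andP/imsetP => [[hP hAP]|[B]].
  move: hP => /andP[/andP[hsub /cards2P[a [b [nab eP]]]] hdis].
  have hab : (forall C D, C \in P -> D \in P -> C != D -> disjoint_mx C D).
    by move=> C D hC hD hCD; have /forall_inP/(_ _ hC)/forall_inP/(_ _ hD) := hdis; move/implyP; apply.
  move: hAP; rewrite eP !inE => /orP[/eqP eA|/eqP eA].
    exists b; last by rewrite eA.
    rewrite inE (subsetP hsub) ?eP ?inE ?eqxx ?orbT //=.
    by rewrite eA; apply: hab; rewrite ?eP ?inE ?eqxx ?orbT.
  exists a; last by rewrite eA setUC.
  rewrite inE (subsetP hsub) ?eP ?inE ?eqxx ?orbT //=.
  by rewrite eA; apply: hab; rewrite ?eP ?inE ?eqxx ?orbT // eq_sym.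
rewrite inE => /andP[hB hd] ->; split; last by rewrite !inE eqxx.
have nAB : A != B by apply: contraTneq hd => <-; exact: sperm_nd.
apply/andP; split.
  apply/andP; split; last by rewrite cards2 nAB.
  by apply/subsetP => C /set2P[->|->].
apply/forall_inP => C; rewrite !inE => hC; apply/forall_inP => D; rewrite !inE => hD.
apply/implyP => nCD.
move: nCD; case/orP: hC => /eqP ->; case/orP: hD => /eqP ->; rewrite ?eqxx // => _.
by rewrite disj_sym.
Qed.

Lemma double_count :
  2 * #|disjoint_sperm_pairs m| =
  \sum_(A in sperm_set m) #|[set B in sperm_set m | disjoint_mx A B]|.
Proof.
have h2 : \sum_(P in disjoint_sperm_pairs m) #|P| = #|disjoint_sperm_pairs m| * 2.
  rewrite -sum_nat_const; apply: eq_bigr => P.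
  by rewrite !inE => /andP[/andP[_ /eqP ->] _].
rewrite mulnC -h2.
under eq_bigr => P _ do rewrite -sum1_card.
rewrite (exchange_big_dep xpredT) //= [RHS]big_mkcond /=; apply: eq_bigr => A _.
case: ifP => hA.
  rewrite -card_pairs_A // -sum1_card; apply: eq_bigl => P; by rewrite !inE.
apply: big_pred0 => P /=; apply/negP => /andP[].
rewrite !inE => /andP[/andP[hsub _] _] hAP.
by move: hA; rewrite (subsetP hsub _ hAP).
Qed.

Lemma sum_disj :
  ((\sum_(A in sperm_set m) #|[set B in sperm_set m | disjoint_mx A B]|)%:R : int)%R =
  ((#|{: X}|)%:R * xi m)%R.
Proof.
rewrite sperm_imset big_imset /=; last by move=> x y _ _; apply: Phi_inj.
rewrite GRing.natr_sum.
rewrite (eq_bigr (fun _ => xi m)); last first.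
  move=> x _; rewrite xi_eq -(count_disj x); congr (_%:R)%R.
  rewrite (_ : [set B in _ | _] = Phi @: [set y | [forall bi, forall bj, ~~ agree x y bi bj]]).
    by rewrite card_imset //; exact: Phi_inj.
  apply/setP => B; rewrite inE; apply/andP/imsetP => [[/imsetP[y _ ->] hd]|[y hy ->]].
    by exists y => //; rewrite inE -Phi_disj.
  by split; [exact: imset_f|]; rewrite Phi_disj; move: hy; rewrite inE.
by rewrite GRing.sumr_const cardsT GRing.mulr_natl.
Qed.
End S.

Local Open Scope ring_scope.

Unset Implicit Arguments.
Theorem mainTheorem7 (n : nat) (hn : (2 <= n)%N) :
  p_n n = (xi n)%:~R / ((n`! ^ (2 * n))%N%:R - 1).
Proof.
case: n hn => [//|n] hn.
set N := (n.+1`! ^ (2 * n.+1))%N.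
have hX : #|{: X n}| = N.
  by rewrite card_prod !card_ffun card_Sn !card_ord -expnD addnn -mul2n.
have hDz : ((2 * #|disjoint_sperm_pairs n.+1|)%N%:R : int) = N%:R * xi n.+1.
  by rewrite double_count sum_disj hX.
have hDq : ((2 * #|disjoint_sperm_pairs n.+1|)%N%:R : rat) = N%:R * (xi n.+1)%:~R.
  have := congr1 (fun z : int => (z%:~R : rat)) hDz; rewrite /= intrM !natz.
  by [].
have hC : (2 * #|sperm_pairs n.+1|)%N = (N * (N - 1))%N.
  rewrite /sperm_pairs cards_draws card_sperm hX.
  by rewrite (mul_bin_left N 1) bin1 mulnC.
have hN1 : (1 < N)%N.
  rewrite /N; apply: (@leq_trans 2) => //.
  have h2 : (2 <= n.+1`!)%N.
    by rewrite factS; apply: (leq_trans hn); rewrite leq_pmulr // fact_gt0.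
  apply: (leq_trans h2); rewrite -{1}(expn1 n.+1`!) leq_pexp2l //; first exact: ltnW.
have hCq : ((#|sperm_pairs n.+1|)%:R : rat) = N%:R * (N%:R - 1) / 2.
  have := congr1 (fun k : nat => (k%:R : rat)) hC; rewrite /= !natrM natrB ?(ltnW hN1) //.
  by move=> h; rewrite -h; field.
rewrite /p_n hCq.
have -> : ((#|disjoint_sperm_pairs n.+1|)%:R : rat) = N%:R * (xi n.+1)%:~R / 2.
  by rewrite -hDq natrM; field.
have hN0 : (N%:R : rat) != 0 by rewrite pnatr_eq0 -lt0n ltnW.
have hN1' : (N%:R - 1 : rat) != 0 by rewrite subr_eq0 pnatr_eq1 neq_ltn hN1 orbT.
field; by rewrite hN0 hN1'.
Qed.
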